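(* Let $\pi_k$ be a stochastic Markov policy, $\alpha\in(0,1)$, and let $S_0=S^{\pi_k}(\alpha)$ be nonempty with $T^{\pi_k}(s,1)>0$ for all $s\in S_0$. Define $$\epsilon_k(x)=x\cdot\min_{s\in S_0}\frac{\alpha-V^{\pi_k}(s,1)}{T^{\pi_k}(s,1)},\qquad L_k(s,x)=\mathbb{E}^{\pi_k}\Big[\sum_{t=0}^{T^*-1}\big(d(s_t,x_t)+\epsilon_k(x_t)\big)\,\Big|\,(s_0,x_0)=(s,x)\Big].$$ Then $\epsilon_k\ge 0$, $(\mathcal{T}_d^{\pi_k}L_k)(s,x)\le L_k(s,x)$ for all $(s,x)\in\mathcal{S}\times\{0,1\}$, and $L_k(s,1)\le\alpha$ for all $s\in S_0$; i.e. $L_k$ satisfies both the Lyapunov condition and the safety condition with respect to $\pi_k$ and $S_0$.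
   Context: Consider a Markov decision process with finite state set $\mathcal{S}$, finite action set $\mathcal{A}$ and transition probabilities $p(s'\mid s,a)$. A target (unsafe) set $\mathcal{G}\subseteq\mathcal{S}$ and a set of terminal states $\mathcal{S}_{\mathrm{term}}\subseteq\mathcal{S}$ are given, and $\mathcal{S}'=\mathcal{S}\setminus\mathcal{S}_{\mathrm{term}}$. The process is augmented with a variable $x_t\in\{0,1\}$ defined by $x_{t+1}=x_t\mathbf{1}_{\mathcal{G}^c}(s_t)$, so $(s_t,x_t)$ is Markov. A (stochastic Markov) policy $\pi$ gives probabilities $\pi(a\mid s,x)$. Let $T^*$ be the first time $t$ with $s_t\in\mathcal{S}_{\mathrm{term}}$. Standing assumption: there is an integer $m$ such that, for every policy and every initial state, $\mathcal{S}_{\mathrm{term}}$ is reached within $m$ steps with positive probability. The stage cost is $d(s,x)=x\,\mathbf{1}_{\mathcal{G}}(s)$ and $V^\pi(s,x)=\mathbb{E}^\pi\big[\sum_{t=0}^{T^*-1}d(s_t,x_t)\mid (s_0,x_0)=(s,x)\big]$; $P^{\mathrm{reach}}_s(\pi)=V^\pi(s,1)$ is the probability of unsafety. The probabilistic safe set of $\pi$ is $S^\pi(\alpha)=\{s\in\mathcal{S}: V^\pi(s,1)\le\alpha\}$. The (expected first-hitting) time is $T^\pi(s,x)=\mathbb{E}^\pi\big[\sum_{t=0}^{T^*-1}x_t\mid(s_0,x_0)=(s,x)\big]$, the expected number of steps before termination during which $\mathcal{G}$ has not yet been left behind. The Bellman operator $\mathcal{T}_d^\pi$ acts on $V:\mathcal{S}\times\{0,1\}\to\mathbb{R}$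 by $(\mathcal{T}_d^\pi V)(s,x)=d(s,x)+\sum_{a}\pi(a\mid s,x)\sum_{s'}p(s'\mid s,a)\,V(s',x\mathbf{1}_{\mathcal{G}^c}(s))$ for $s\in\mathcal{S}'$, and $(\mathcal{T}_d^\pi V)(s,x)=0$ for $s\in\mathcal{S}_{\mathrm{term}}$. *)

(* Defs.v *)
From Stdlib Require Import Bool Reals List ClassicalEpsilon.
Import ListNotations.
Open Scope R_scope.

(* Finite MDP: states St and actions Ac are finite types given by complete,
   duplicate-free enumerations lS, lA.  G = target (unsafe) set,
   term = terminal set S_term, p s a s' = p(s' | s, a). *)
Record MDP := mkMDP {
  St : Type;
  Ac : Type;
  lS : list St;
  lA : list Ac;
  p : St -> Ac -> St -> R;
  G : St -> bool;
  term : St -> bool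
}.

Definition sumR {T : Type} (l : list T) (f : T -> R) : R :=
  fold_right (fun a acc => f a + acc) 0 l.

Definition wf_MDP (M : MDP) : Prop :=
  NoDup (lS M) /\ (forall s, In s (lS M)) /\
  NoDup (lA M) /\ (forall a, In a (lA M)) /\
  (forall s a s', 0 <= p M s a s') /\
  (forall s a, sumR (lS M) (fun s' => p M s a s') = 1).

(* Stochastic Markov policy on the augmented state (s, x), x : bool ~ {0,1}. *)
Definition policy (M : MDP) := St M -> bool -> Ac M -> R.

Definition valid_policy (M : MDP) (pi : policy M) : Prop :=
  (forall s x a, 0 <= pi s x a) /\
  (forall s x, sumR (lA M) (pi s x) = 1).

Definition xnext (M : MDP) (s : St M) (x : bool) : bool := x && negb (G M s).

Fixpoint tuples (M : MDP) (N : nat) : list (list (St M)) :=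
  match N with
  | O => [nil]
  | S n => flat_map (fun s => map (cons s) (tuples M n)) (lS M)
  end.

(* probability, under pi and started at (s,x), that s_1 ... s_N = path *)
Fixpoint pathprob (M : MDP) (pi : policy M) (s : St M) (x : bool)
    (path : list (St M)) : R :=
  match path with
  | nil => 1
  | s' :: rest =>
      sumR (lA M) (fun a => pi s x a * p M s a s') *
      pathprob M pi s' (xnext M s x) rest
  end.

(* augmented trajectory (s_t, x_t), t = 0 .. N-1, of the path s_0 = s, s_1..s_N *)
Fixpoint traj (M : MDP) (s : St M) (x : bool) (path : list (St M))
    : list (St M * bool) :=
  match path with
  | nil => nil
  | s' :: rest => (s, x) :: traj M s' (xnext M s x) rest
  end.

(* sum_{t < min(T*, N)} c(s_t, x_t) along a trajectory of length N *)
Fixpoint tcost (M : MDP) (c : St M -> bool -> R) (tr : list (St M * bool)) : R :=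
  match tr with
  | nil => 0
  | (s, x) :: rest => if term M s then 0 else c s x + tcost M c rest
  end.

(* E^pi [ sum_{t=0}^{min(T*,N)-1} c(s_t,x_t) | (s_0,x_0) = (s,x) ] *)
Definition Etrunc (M : MDP) (pi : policy M) (c : St M -> bool -> R)
    (N : nat) (s : St M) (x : bool) : R :=
  sumR (tuples M N)
    (fun path => pathprob M pi s x path * tcost M c (traj M s x path)).

(* limit of a real sequence (0 if it does not converge) *)
Definition lim_seq (u : nat -> R) : R :=
  match excluded_middle_informative (exists l, Un_cv u l) with
  | left H => proj1_sig (constructive_indefinite_description _ H)
  | right _ => 0
  end.

(* E^pi [ sum_{t=0}^{T*-1} c(s_t,x_t) | (s_0,x_0) = (s,x) ]
   (monotone limit of the truncated expectations) *)
Definition Ecost (M : MDP) (pi : policy M) (c : St M -> bool -> R)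
    (s : St M) (x : bool) : R :=
  lim_seq (fun N => Etrunc M pi c N s x).

Definition dcost (M : MDP) (s : St M) (x : bool) : R :=
  if x && G M s then 1 else 0.

Definition xR (x : bool) : R := if x then 1 else 0.

Definition Vpi (M : MDP) (pi : policy M) : St M -> bool -> R :=
  Ecost M pi (dcost M).

(* expected first-hitting time T^pi(s,x) = E[sum_{t<T*} x_t] *)
Definition Tpi (M : MDP) (pi : policy M) : St M -> bool -> R :=
  Ecost M pi (fun _ x => xR x).

(* Pr^pi( s_t in S_term for some t <= m | (s_0,x_0) = (s,x) ) *)
Definition reach_term_prob (M : MDP) (pi : policy M) (m : nat)
    (s : St M) (x : bool) : R :=
  sumR (tuples M m)
    (fun path => pathprob M pi s x path *
                 (if existsb (term M) (s :: path) then 1 else 0)).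

Definition standing_assumption (M : MDP) : Prop :=
  exists m : nat, forall pi : policy M, valid_policy M pi ->
    forall s x, 0 < reach_term_prob M pi m s x.

Definition Bellman_d (M : MDP) (pi : policy M) (V : St M -> bool -> R)
    (s : St M) (x : bool) : R :=
  if term M s then 0
  else dcost M s x +
       sumR (lA M) (fun a => pi s x a *
         sumR (lS M) (fun s' => p M s a s' * V s' (xnext M s x))).

Definition in_safe_set (M : MDP) (pi : policy M) (alpha : R) (s : St M) : bool :=
  if Rle_dec (Vpi M pi s true) alpha then true else false.

(* minimum of a (nonempty) list of reals; 0 on the empty list *)
Definition list_min (l : list R) : R :=
  match l with
  | nil => 0
  | h :: t => fold_left Rmin t h
  end.

Definition eps_k (M : MDP) (pi : policy M) (alpha : R) (x : bool) : R :=
  xR x * list_min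
    (map (fun s => (alpha - Vpi M pi s true) / Tpi M pi s true)
         (filter (in_safe_set M pi alpha) (lS M))).

Definition L_k (M : MDP) (pi : policy M) (alpha : R) : St M -> bool -> R :=
  Ecost M pi (fun s x => dcost M s x + eps_k M pi alpha x).

(* Main.v *)
Require Import Defs.
From Stdlib Require Import Bool Reals List Lra Lia ClassicalEpsilon.
Import ListNotations.
Open Scope R_scope.

Lemma sumR_ext {T} (l:list T) f g : (forall a, f a = g a) -> sumR l f = sumR l g.
Proof. induction l; simpl; intros H; auto. rewrite H, IHl; auto. Qed.
Lemma sumR_le {T} (l:list T) f g : (forall a, f a <= g a) -> sumR l f <= sumR l g.
Proof. induction l; simpl; intros H. lra. specialize (IHl H). specialize (H a). lra. Qed.
Lemma sumR_zero {T} (l:list T) : sumR l (fun _ => 0) = 0.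
Proof. induction l; simpl; auto. rewrite IHl; ring. Qed.
Lemma sumR_plus {T} (l:list T) f g : sumR l (fun a => f a + g a) = sumR l f + sumR l g.
Proof. induction l; simpl. ring. rewrite IHl; ring. Qed.
Lemma sumR_scal {T} (l:list T) k f : sumR l (fun a => k * f a) = k * sumR l f.
Proof. induction l; simpl. ring. rewrite IHl; ring. Qed.
Lemma sumR_app {T} (l1 l2:list T) f : sumR (l1++l2) f = sumR l1 f + sumR l2 f.
Proof. induction l1; simpl. ring. rewrite IHl1; ring. Qed.
Lemma sumR_map {T U} (h:T->U) l f : sumR (map h l) f = sumR l (fun a => f (h a)).
Proof. induction l; simpl; auto. rewrite IHl; auto. Qed.
Lemma sumR_flat_map {T U} (h:T->list U) l f :
  sumR (flat_map h l) f = sumR l (fun a => sumR (h a) f).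
Proof. induction l; simpl; auto. rewrite sumR_app, IHl; auto. Qed.
Lemma sumR_swap {T U} (l1:list T) (l2:list U) (f : T -> U -> R) :
  sumR l1 (fun i => sumR l2 (f i)) = sumR l2 (fun j => sumR l1 (fun i => f i j)).
Proof.
  induction l1; simpl. symmetry; apply sumR_zero.
  rewrite IHl1, <- sumR_plus. reflexivity.
Qed.
Lemma sumR_nonneg {T} (l:list T) f : (forall a, 0 <= f a) -> 0 <= sumR l f.
Proof. intros H. induction l; simpl. lra. specialize (H a). lra. Qed.

Definition q (M:MDP) (pi:policy M) (s:St M) (x:bool) (s':St M) : R :=
  sumR (lA M) (fun a => pi s x a * p M s a s').

Lemma q_nonneg M pi : wf_MDP M -> valid_policy M pi -> forall s x s', 0 <= q M pi s x s'.
Proof.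
  unfold q; intros [_ [_ [_ [_ [Hp _]]]]] [Hpi _] s x s'.
  apply sumR_nonneg; intros; apply Rmult_le_pos; auto.
Qed.

Lemma q_sum M pi : wf_MDP M -> valid_policy M pi -> forall s x, sumR (lS M) (q M pi s x) = 1.
Proof.
  intros HM Hpi s x. unfold q. rewrite (sumR_swap (lS M) (lA M) (fun s' a => pi s x a * p M s a s')).
  rewrite (sumR_ext _ _ (fun a => pi s x a * 1)).
  2:{ intros a. rewrite (sumR_scal _ (pi s x a) (fun s' => p M s a s')).
      destruct HM as [_ [_ [_ [_ [_ Hs]]]]]. rewrite Hs. auto. }
  rewrite (sumR_ext _ _ (pi s x)) by (intros; ring). destruct Hpi as [_ H]; auto.
Qed.

Lemma pp_total M pi : wf_MDP M -> valid_policy M pi ->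
  forall N s x, sumR (tuples M N) (pathprob M pi s x) = 1.
Proof.
  intros HM Hpi N. induction N; intros s x. simpl. ring.
  simpl tuples. rewrite sumR_flat_map.
  rewrite (sumR_ext _ _ (q M pi s x)). apply q_sum; auto.
  intros s'. rewrite sumR_map.
  rewrite (sumR_ext _ _ (fun r => q M pi s x s' * pathprob M pi s' (xnext M s x) r)) by reflexivity.
  rewrite sumR_scal, IHN. ring.
Qed.

Lemma Etrunc_0 M pi c s x : Etrunc M pi c 0 s x = 0.
Proof. unfold Etrunc; simpl; ring. Qed.

Lemma Etrunc_S M pi c N s x : wf_MDP M -> valid_policy M pi ->
  Etrunc M pi c (S N) s x = if term M s then 0 else c s x +
    sumR (lS M) (fun s' => q M pi s x s' * Etrunc M pi c N s' (xnext M s x)).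
Proof.
  intros HM Hpi. unfold Etrunc at 1. simpl tuples. rewrite sumR_flat_map.
  rewrite (sumR_ext _ _ (fun s' => sumR (tuples M N) (fun r => q M pi s x s' * pathprob M pi s' (xnext M s x) r * (if term M s then 0 else c s x + tcost M c (traj M s' (xnext M s x) r))))).
  2:{ intros s'. rewrite sumR_map. reflexivity. }
  destruct (term M s).
  - rewrite (sumR_ext _ _ (fun _ => 0)). apply sumR_zero. intros.
    rewrite (sumR_ext _ _ (fun _ => 0)). apply sumR_zero. intros; ring.
  - rewrite (sumR_ext _ _ (fun s' => c s x * q M pi s x s' + q M pi s x s' * Etrunc M pi c N s' (xnext M s x))).
    + rewrite sumR_plus, sumR_scal, q_sum; auto. ring.
    + intros s'. unfold Etrunc.
      rewrite (sumR_ext _ _ (fun r => (c s x * q M pi s x s') * pathprob M pi s' (xnext M s x) r + q M pi s x s' * (pathprob M pi s' (xnext M s x) r * tcost M c (traj M s' (xnext M s x) r)))) by (intros; ring).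
      rewrite sumR_plus, sumR_scal, sumR_scal, pp_total; auto. ring.
Qed.

Lemma reach_0 M pi s x : reach_term_prob M pi 0 s x = if term M s then 1 else 0.
Proof. unfold reach_term_prob; simpl. destruct (term M s); simpl; ring. Qed.

Lemma reach_S M pi m s x : wf_MDP M -> valid_policy M pi ->
  reach_term_prob M pi (S m) s x = if term M s then 1 else
    sumR (lS M) (fun s' => q M pi s x s' * reach_term_prob M pi m s' (xnext M s x)).
Proof.
  intros HM Hpi. unfold reach_term_prob at 1. simpl tuples. rewrite sumR_flat_map.
  rewrite (sumR_ext _ _ (fun s' => sumR (tuples M m) (fun r => q M pi s x s' * (pathprob M pi s' (xnext M s x) r * (if term M s then 1 else if existsb (term M) (s' :: r) then 1 else 0))))).
  2:{ intros s'. rewrite sumR_map. apply sumR_ext. intros r. simpl pathprob.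
      change (existsb (term M) (s :: s' :: r)) with (term M s || existsb (term M) (s' :: r)).
      unfold q. destruct (term M s); simpl; ring. }
  destruct (term M s).
  - rewrite (sumR_ext _ _ (fun s' => q M pi s x s' * 1)). 
    + rewrite (sumR_ext _ _ (q M pi s x)) by (intros; ring). apply q_sum; auto.
    + intros s'. rewrite sumR_scal. f_equal.
      rewrite (sumR_ext _ _ (pathprob M pi s' (xnext M s x))) by (intros; ring). apply pp_total; auto.
  - apply sumR_ext. intros s'. rewrite sumR_scal. reflexivity.
Qed.
Fixpoint g (M:MDP) (pi:policy M) (t:nat) (s:St M) (x:bool) : R :=
  match t with
  | O => if term M s then 0 else 1
  | S t' => if term M s then 0 else
      sumR (lS M) (fun s' => q M pi s x s' * g M pi t' s' (xnext M s x))
  end.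

Lemma g_reach M pi : wf_MDP M -> valid_policy M pi ->
  forall t s x, g M pi t s x = 1 - reach_term_prob M pi t s x.
Proof.
  intros HM Hpi t. induction t; intros s x.
  - rewrite reach_0. simpl. destruct (term M s); ring.
  - rewrite reach_S by auto. simpl. destruct (term M s). ring.
    rewrite (sumR_ext _ _ (fun s' => q M pi s x s' + (-1) * (q M pi s x s' * reach_term_prob M pi t s' (xnext M s x)))).
    rewrite sumR_plus, sumR_scal, q_sum by auto. ring.
    intros s'. rewrite IHt. ring.
Qed.

Lemma g_term M pi t s x : term M s = true -> g M pi t s x = 0.
Proof. intros H; destruct t; simpl; rewrite H; auto. Qed.

Lemma g_bounds M pi : wf_MDP M -> valid_policy M pi ->
  forall t s x, 0 <= g M pi t s x <= 1.
Proof.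
  intros HM Hpi t. induction t; intros s x; simpl; destruct (term M s); try lra.
  split.
  - apply sumR_nonneg. intros s'. apply Rmult_le_pos. apply q_nonneg; auto. apply IHt.
  - rewrite <- (q_sum M pi HM Hpi s x). apply sumR_le. intros s'.
    rewrite <- (Rmult_1_r (q M pi s x s')) at 2. apply Rmult_le_compat_l.
    apply q_nonneg; auto. apply IHt.
Qed.

Lemma g_mono M pi : wf_MDP M -> valid_policy M pi ->
  forall t s x, g M pi (S t) s x <= g M pi t s x.
Proof.
  intros HM Hpi t. induction t; intros s x.
  - pose proof (g_bounds M pi HM Hpi 1 s x). simpl in *. destruct (term M s); lra.
  - simpl. destruct (term M s). lra.
    apply sumR_le. intros s'. apply Rmult_le_compat_l. apply q_nonneg; auto. apply IHt.
Qed.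

Lemma g_mult M pi : wf_MDP M -> valid_policy M pi -> forall b K,
  (forall s x, g M pi b s x <= K) ->
  forall a s x, g M pi (a + b) s x <= g M pi a s x * K.
Proof.
  intros HM Hpi b K HK a. induction a; intros s x.
  - simpl plus. destruct (term M s) eqn:E.
    + rewrite g_term by auto. simpl. rewrite E. lra.
    + simpl. rewrite E. specialize (HK s x). lra.
  - simpl plus. simpl. destruct (term M s). lra.
    rewrite Rmult_comm, <- sumR_scal. apply sumR_le. intros s'.
    specialize (IHa s' (xnext M s x)).
    pose proof (q_nonneg M pi HM Hpi s x s').
    replace (K * (q M pi s x s' * g M pi a s' (xnext M s x))) with
      (q M pi s x s' * (g M pi a s' (xnext M s x) * K)) by ring.
    apply Rmult_le_compat_l; auto.
Qed.

Lemma fold_Rmax_ge (l : list R) y : In y l -> y <= fold_right Rmax 0 l.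
Proof.
  induction l; simpl; intros H. contradiction.
  destruct H as [<-|H]. apply Rmax_l. eapply Rle_trans. apply IHl; auto. apply Rmax_r.
Qed.
Lemma fold_Rmax_lt (l : list R) b : 0 < b -> (forall y, In y l -> y < b) -> fold_right Rmax 0 l < b.
Proof.
  induction l; simpl; intros H0 H; auto. apply Rmax_lub_lt; auto.
Qed.
Lemma fold_Rmax_nonneg (l : list R) : 0 <= fold_right Rmax 0 l.
Proof. induction l; simpl. lra. eapply Rle_trans. apply IHl. apply Rmax_r. Qed.

Definition gmax M pi t :=
  fold_right Rmax 0 (map (fun s => Rmax (g M pi t s true) (g M pi t s false)) (lS M)).

Lemma le_gmax M pi t : wf_MDP M -> forall s x, g M pi t s x <= gmax M pi t.
Proof.
  intros HM s x. unfold gmax. eapply Rle_trans. 2: apply fold_Rmax_ge.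
  2:{ apply in_map. destruct HM as [_ [HS _]]. apply HS. }
  destruct x. apply Rmax_l. apply Rmax_r.
Qed.

Fixpoint sumN (n:nat) (h:nat->R) : R :=
  match n with O => 0 | S n' => h O + sumN n' (fun t => h (S t)) end.

Lemma sumN_ext n h1 h2 : (forall t, h1 t = h2 t) -> sumN n h1 = sumN n h2.
Proof. revert h1 h2; induction n; simpl; intros h1 h2 H; auto. rewrite H. f_equal. apply IHn; auto. Qed.
Lemma sumN_le n h1 h2 : (forall t, h1 t <= h2 t) -> sumN n h1 <= sumN n h2.
Proof. revert h1 h2; induction n; simpl; intros h1 h2 H. lra. specialize (IHn (fun t => h1 (S t)) (fun t => h2 (S t)) (fun t => H (S t))). specialize (H O). lra. Qed.
Lemma sumN_scal n k h : sumN n (fun t => k * h t) = k * sumN n h.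
Proof. revert h; induction n; simpl; intros h. ring. rewrite (IHn (fun t => h (S t))). ring. Qed.
Lemma sumN_zero n : sumN n (fun _ => 0) = 0.
Proof. induction n; simpl; auto. rewrite IHn; ring. Qed.
Lemma sumN_split P N h : sumN (P + N) h = sumN P h + sumN N (fun t => h (P + t)%nat).
Proof. revert h; induction P; simpl; intros h. rewrite Rplus_0_l; reflexivity. rewrite IHP. ring. Qed.
Lemma sumN_bound n h : (forall t, h t <= 1) -> sumN n h <= INR n.
Proof.
  revert h; induction n; cbn [sumN]; intros h H. simpl; lra.
  specialize (IHn (fun t => h (S t)) (fun t => H (S t))). specialize (H O).
  rewrite S_INR. lra.
Qed.
Lemma sumN_sumR_swap n {T} (l : list T) (f : nat -> T -> R) :
  sumN n (fun t => sumR l (f t)) = sumR l (fun a => sumN n (fun t => f t a)).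
Proof.
  revert f; induction n; simpl; intros f. symmetry; apply sumR_zero.
  rewrite (IHn (fun t => f (S t))), <- sumR_plus. reflexivity.
Qed.

Definition fsum M pi N s x := sumN N (fun t => g M pi t s x).

Lemma fsum_S M pi N s x : fsum M pi (S N) s x = if term M s then 0 else
  1 + sumR (lS M) (fun s' => q M pi s x s' * fsum M pi N s' (xnext M s x)).
Proof.
  unfold fsum. cbn [sumN]. destruct (term M s) eqn:E.
  - rewrite (sumN_ext _ _ (fun _ => 0)). rewrite sumN_zero. rewrite g_term by auto. ring.
    intros t; apply g_term; auto.
  - rewrite (sumN_ext _ _ (fun t => sumR (lS M) (fun s' => q M pi s x s' * g M pi t s' (xnext M s x)))).
    2:{ intros t. simpl. rewrite E. reflexivity. }
    replace (g M pi 0 s x) with 1 by (simpl; rewrite E; reflexivity). f_equal.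
    rewrite sumN_sumR_swap. apply sumR_ext. intros s'. apply sumN_scal.
Qed.

Lemma fsum_bound M pi m : wf_MDP M -> valid_policy M pi ->
  (forall s x, 0 < reach_term_prob M pi m s x) ->
  exists B, forall N s x, fsum M pi N s x <= B.
Proof.
  intros HM Hpi Hr.
  set (K := gmax M pi (S m)).
  assert (HK0 : 0 <= K) by apply fold_Rmax_nonneg.
  assert (HK1 : K < 1).
  { apply fold_Rmax_lt. lra. intros y Hy. apply in_map_iff in Hy as [s [<- _]].
    assert (forall x, g M pi (S m) s x < 1).
    { intros x. eapply Rle_lt_trans. apply g_mono; auto. rewrite g_reach by auto.
      specialize (Hr s x). lra. }
    apply Rmax_lub_lt; auto. }
  set (P := S m).
  exists (INR P / (1 - K)).
  assert (HB : INR P = INR P / (1 - K) * (1 - K)) by (field; lra).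
  assert (HP : 0 <= INR P) by apply pos_INR.
  assert (HBP : INR P <= INR P / (1 - K)).
  { assert (0 <= INR P / (1 - K)) by (apply Rmult_le_pos; auto; left; apply Rinv_0_lt_compat; lra).
    nra. }
  intros N. induction N as [N IH] using (well_founded_induction Wf_nat.lt_wf). intros s x.
  destruct (Compare_dec.le_lt_dec N P) as [Hle|Hlt].
  - eapply Rle_trans. apply sumN_bound. intros t. apply g_bounds; auto.
    eapply Rle_trans. apply le_INR; eauto. auto.
  - replace N with (P + (N - P))%nat by lia. unfold fsum. rewrite sumN_split.
    assert (H1 : sumN P (fun t => g M pi t s x) <= INR P).
    { apply sumN_bound. intros t; apply g_bounds; auto. }
    assert (H2 : sumN (N - P) (fun t => g M pi (P + t) s x) <= K * fsum M pi (N - P) s x).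
    { unfold fsum. rewrite <- sumN_scal. apply sumN_le. intros t.
      rewrite Nat.add_comm. rewrite Rmult_comm. apply g_mult; auto.
      intros; apply le_gmax; auto. }
    assert (H3 : fsum M pi (N - P) s x <= INR P / (1 - K)) by (apply IH; lia).
    assert (K * fsum M pi (N - P) s x <= K * (INR P / (1 - K))) by (apply Rmult_le_compat_l; auto).
    nra.
Qed.

Lemma Etrunc_props M pi c C : wf_MDP M -> valid_policy M pi ->
  (forall s x, 0 <= c s x <= C) ->
  forall N s x, 0 <= Etrunc M pi c N s x <= C * fsum M pi N s x /\
                Etrunc M pi c N s x <= Etrunc M pi c (S N) s x.
Proof.
  intros HM Hpi Hc N. induction N; intros s x.
  - rewrite Etrunc_S, Etrunc_0 by auto. unfold fsum; simpl sumN.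
    split. lra. destruct (term M s). lra.
    pose proof (Hc s x).
    rewrite (sumR_ext _ _ (fun _ => 0)) by (intros; rewrite Etrunc_0; ring).
    rewrite sumR_zero. lra.
  - rewrite !Etrunc_S by auto. rewrite fsum_S.
    destruct (term M s). lra.
    pose proof (Hc s x). pose proof (q_nonneg M pi HM Hpi s x) as Hq.
    split; [split|].
    + assert (0 <= sumR (lS M) (fun s' => q M pi s x s' * Etrunc M pi c N s' (xnext M s x))).
      { apply sumR_nonneg; intros s'. apply Rmult_le_pos; auto. apply IHN. } lra.
    + rewrite Rmult_plus_distr_l, <- sumR_scal.
      assert (sumR (lS M) (fun s' => q M pi s x s' * Etrunc M pi c N s' (xnext M s x)) <=
              sumR (lS M) (fun a => C * (q M pi s x a * fsum M pi N a (xnext M s x)))).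
      { apply sumR_le. intros s'.
        replace (C * (q M pi s x s' * fsum M pi N s' (xnext M s x))) with
          (q M pi s x s' * (C * fsum M pi N s' (xnext M s x))) by ring.
        apply Rmult_le_compat_l; auto. apply IHN. }
      lra.
    + assert (sumR (lS M) (fun s' => q M pi s x s' * Etrunc M pi c N s' (xnext M s x)) <=
              sumR (lS M) (fun s' => q M pi s x s' * Etrunc M pi c (S N) s' (xnext M s x))).
      { apply sumR_le. intros s'. apply Rmult_le_compat_l; auto. apply IHN. }
      lra.
Qed.

Lemma Ecost_cv M pi c C : wf_MDP M -> valid_policy M pi -> standing_assumption M ->
  (forall s x, 0 <= c s x <= C) ->
  forall s x, Un_cv (fun N => Etrunc M pi c N s x) (Ecost M pi c s x).
Proof.
  intros HM Hpi [m Hm] Hc s x.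
  destruct (fsum_bound M pi m HM Hpi (Hm pi Hpi)) as [B HB].
  pose proof (Etrunc_props M pi c C HM Hpi Hc) as HE.
  destruct (growing_cv (fun N => Etrunc M pi c N s x)) as [l Hl].
  - intros n. apply HE.
  - exists (C * B). intros y [n ->]. destruct (HE n s x) as [[_ H1] _].
    eapply Rle_trans. apply H1.
    apply Rmult_le_compat_l. specialize (Hc s x). lra. apply HB.
  - unfold Ecost, lim_seq. destruct excluded_middle_informative as [e|n].
    + destruct (constructive_indefinite_description _ e) as [l' Hl']. exact Hl'.
    + exfalso. apply n. eauto.
Qed.

Lemma Etrunc_lin M pi c1 c2 k : wf_MDP M -> valid_policy M pi ->
  forall N s x, Etrunc M pi (fun s x => c1 s x + k * c2 s x) N s x =
    Etrunc M pi c1 N s x + k * Etrunc M pi c2 N s x.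
Proof.
  intros HM Hpi N. induction N; intros s x.
  - rewrite !Etrunc_0. ring.
  - rewrite !Etrunc_S by auto. destruct (term M s). ring.
    rewrite (sumR_ext _ _ (fun s' => q M pi s x s' * Etrunc M pi c1 N s' (xnext M s x) + k * (q M pi s x s' * Etrunc M pi c2 N s' (xnext M s x)))).
    rewrite sumR_plus, sumR_scal. ring.
    intros s'. rewrite IHN. ring.
Qed.

Lemma Etrunc_ext M pi c1 c2 : wf_MDP M -> valid_policy M pi ->
  (forall s x, c1 s x = c2 s x) ->
  forall N s x, Etrunc M pi c1 N s x = Etrunc M pi c2 N s x.
Proof.
  intros HM Hpi H N. induction N; intros s x.
  - rewrite !Etrunc_0. ring.
  - rewrite !Etrunc_S by auto. destruct (term M s). ring.
    rewrite H. f_equal. apply sumR_ext. intros s'. rewrite IHN. ring.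
Qed.

Lemma cv_const (k : R) : Un_cv (fun _ => k) k.
Proof. intros eps He. exists O. intros. unfold Rdist. rewrite Rminus_diag, Rabs_R0. auto. Qed.

Lemma cv_ext (u v : nat -> R) l : (forall n, u n = v n) -> Un_cv u l -> Un_cv v l.
Proof. intros H Hu eps He. destruct (Hu eps He) as [N HN]. exists N. intros n Hn. rewrite <- H. auto. Qed.

Lemma cv_shift (u : nat -> R) l : Un_cv u l -> Un_cv (fun n => u (S n)) l.
Proof. intros Hu eps He. destruct (Hu eps He) as [N HN]. exists N. intros n Hn. apply HN. lia. Qed.

Lemma cv_nonneg (u : nat -> R) l : Un_cv u l -> (forall n, 0 <= u n) -> 0 <= l.
Proof.
  intros Hu H. destruct (Rle_lt_dec 0 l) as [|Hl]; auto.
  destruct (Hu (- l)) as [N HN]. lra. specialize (HN N (le_n N)). specialize (H N).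
  unfold Rdist in HN. rewrite Rabs_right in HN by lra. lra.
Qed.

Lemma cv_sumR {T} (l0 : list T) (F : nat -> T -> R) (lim : T -> R) :
  (forall a, Un_cv (fun N => F N a) (lim a)) ->
  Un_cv (fun N => sumR l0 (F N)) (sumR l0 lim).
Proof.
  intros H. induction l0; simpl.
  - apply cv_const.
  - apply CV_plus; auto.
Qed.

Lemma list_min_le (l : list R) y : In y l -> list_min l <= y.
Proof.
  destruct l as [|h t]; simpl. contradiction.
  assert (Hg : forall t h, fold_left Rmin t h <= h /\ forall y, In y t -> fold_left Rmin t h <= y).
  { induction t0 as [|a t0 IH]; intros h0; simpl. split. lra. contradiction.
    destruct (IH (Rmin h0 a)) as [H1 H2]. split.
    - eapply Rle_trans. apply H1. apply Rmin_l.
    - intros y0 [<-|Hy]. eapply Rle_trans. apply H1. apply Rmin_r. auto. }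
  intros [<-|Hy]. apply (proj1 (Hg t h)). apply (proj2 (Hg t h)); auto.
Qed.

Lemma list_min_nonneg (l : list R) : (forall y, In y l -> 0 <= y) -> 0 <= list_min l.
Proof.
  destruct l as [|h t]; simpl. lra.
  intros H. assert (Hh : 0 <= h) by auto. assert (Ht : forall y, In y t -> 0 <= y) by auto.
  clear H. revert h Hh. induction t as [|a t IH]; intros h Hh; simpl. auto.
  apply IH. intros; apply Ht; simpl; auto. apply Rmin_glb; auto. apply Ht; simpl; auto.
Qed.

Theorem mainTheorem2 (M : MDP) (HM : wf_MDP M)
  (Hstand : standing_assumption M)
  (pi : policy M) (Hpi : valid_policy M pi)
  (alpha : R) (Halpha : 0 < alpha < 1)
  (Hne : exists s0 : St M, Vpi M pi s0 true <= alpha)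
  (HT : forall s : St M, Vpi M pi s true <= alpha -> 0 < Tpi M pi s true) :
  (forall x : bool, 0 <= eps_k M pi alpha x) /\
  (forall (s : St M) (x : bool),
      Bellman_d M pi (L_k M pi alpha) s x <= L_k M pi alpha s x) /\
  (forall s : St M, Vpi M pi s true <= alpha -> L_k M pi alpha s true <= alpha).
Proof.
  set (kap := list_min (map (fun s => (alpha - Vpi M pi s true) / Tpi M pi s true)
         (filter (in_safe_set M pi alpha) (lS M)))).
  assert (Hk0 : 0 <= kap).
  { apply list_min_nonneg. intros y Hy. apply in_map_iff in Hy as [s [<- Hs]].
    apply filter_In in Hs as [_ Hs]. unfold in_safe_set in Hs.
    destruct (Rle_dec (Vpi M pi s true) alpha) as [Hv|]; [|discriminate].
    specialize (HT s Hv). unfold Rdiv. apply Rmult_le_pos. lra. left; apply Rinv_0_lt_compat; auto. }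
  assert (Hkle : forall s, Vpi M pi s true <= alpha -> kap * Tpi M pi s true <= alpha - Vpi M pi s true).
  { intros s Hv. assert (kap <= (alpha - Vpi M pi s true) / Tpi M pi s true).
    { apply list_min_le. apply in_map_iff. exists s. split; auto. apply filter_In. split.
      destruct HM as [_ [HS _]]; apply HS. unfold in_safe_set.
      destruct (Rle_dec (Vpi M pi s true) alpha); auto. }
    specialize (HT s Hv).
    assert (kap * Tpi M pi s true <= (alpha - Vpi M pi s true) / Tpi M pi s true * Tpi M pi s true)
      by (apply Rmult_le_compat_r; lra).
    replace ((alpha - Vpi M pi s true) / Tpi M pi s true * Tpi M pi s true) with (alpha - Vpi M pi s true) in H0 by (field; lra).
    exact H0. }
  assert (Heps : forall x, eps_k M pi alpha x = xR x * kap) by reflexivity.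
  assert (HepsP : forall x, 0 <= eps_k M pi alpha x).
  { intros x. rewrite Heps. apply Rmult_le_pos; auto. destruct x; simpl; lra. }
  set (Lc := fun s x => dcost M s x + eps_k M pi alpha x).
  assert (HLc : forall s x, 0 <= Lc s x <= 1 + kap).
  { intros s x. unfold Lc. rewrite Heps. unfold dcost.
    destruct (x && G M s), x; simpl; lra. }
  assert (HLcv : forall s x, Un_cv (fun N => Etrunc M pi Lc N s x) (L_k M pi alpha s x)).
  { intros s x. apply (Ecost_cv M pi Lc (1 + kap)); auto. }
  assert (HV : forall s x, Un_cv (fun N => Etrunc M pi (dcost M) N s x) (Vpi M pi s x)).
  { intros s x. apply (Ecost_cv M pi _ 1); auto. intros; unfold dcost. destruct (x0 && G M s0); lra. }
  assert (HTc : forall s x, Un_cv (fun N => Etrunc M pi (fun _ x => xR x) N s x) (Tpi M pi s x)).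
  { intros s x. apply (Ecost_cv M pi _ 1); auto. intros; destruct x0; simpl; lra. }
  assert (HLVT : forall s x, L_k M pi alpha s x = Vpi M pi s x + kap * Tpi M pi s x).
  { intros s x. eapply UL_sequence. apply HLcv.
    apply (cv_ext (fun N => Etrunc M pi (dcost M) N s x + kap * Etrunc M pi (fun _ x => xR x) N s x)).
    - intros n. rewrite <- Etrunc_lin by auto. apply Etrunc_ext; auto.
      intros; unfold Lc; rewrite Heps; ring.
    - apply CV_plus. auto. apply CV_mult. apply cv_const. auto. }
  split; [exact HepsP|split].
  - intros s x. unfold Bellman_d. destruct (term M s) eqn:E.
    + eapply cv_nonneg. apply HLcv. intros n. apply (Etrunc_props M pi Lc (1 + kap)); auto.
    + assert (HB : L_k M pi alpha s x = Lc s x + sumR (lS M) (fun s' => q M pi s x s' * L_k M pi alpha s' (xnext M s x))).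
      { eapply UL_sequence. apply cv_shift. apply HLcv.
        apply (cv_ext (fun N => Lc s x + sumR (lS M) (fun s' => q M pi s x s' * Etrunc M pi Lc N s' (xnext M s x)))).
        - intros n. rewrite Etrunc_S by auto. rewrite E. reflexivity.
        - apply CV_plus. apply cv_const. apply (cv_sumR _ (fun N s' => q M pi s x s' * Etrunc M pi Lc N s' (xnext M s x))).
          intros s'. apply CV_mult. apply cv_const. apply HLcv. }
      assert (Hsw : sumR (lA M) (fun a => pi s x a * sumR (lS M) (fun s' => p M s a s' * L_k M pi alpha s' (xnext M s x))) =
                    sumR (lS M) (fun s' => q M pi s x s' * L_k M pi alpha s' (xnext M s x))).
      { unfold q.
        rewrite (sumR_ext (lS M) _ (fun s' => sumR (lA M) (fun a => pi s x a * p M s a s' * L_k M pi alpha s' (xnext M s x)))).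
        2:{ intros s'. rewrite Rmult_comm, <- sumR_scal. apply sumR_ext. intros; ring. }
        rewrite <- (sumR_swap (lA M) (lS M) (fun a s' => pi s x a * p M s a s' * L_k M pi alpha s' (xnext M s x))).
        apply sumR_ext. intros a. rewrite <- sumR_scal. apply sumR_ext. intros; ring. }
      rewrite Hsw. unfold Lc in HB. specialize (HepsP x). lra.
  - intros s Hv. rewrite HLVT. specialize (Hkle s Hv). lra.
Qed.
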